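(* Let $V$ be a real vector space of dimension $d>1$, $\Gamma<\mathrm{SL}(V)$ a torsion-free projective Anosov subgroup with limit maps $\xi,\xi^*$, and $\widetilde{\mathcal{M}}_\Gamma$ as in the context. Let $[v:\alpha]\in\widetilde{\mathcal{M}}_\Gamma$ and $\gamma\in\Gamma\setminus\{e\}$ be such that $\gamma\cdot[v:\alpha]=[e^Tv:e^{-T}\alpha]$ for some $T\ge0$. Then $[v]=\xi(\gamma_+)$, $[\alpha]=\xi^*(\gamma_-)$ and $T=\lambda_1(\gamma)$.
   Context: Projective Anosov: finitely generated Gromov hyperbolic, $\lambda_1(\gamma)-\lambda_2(\gamma)\ge c|\gamma|_\infty-c'$, where $\lambda_1\ge\lambda_2\ge\dots$ are the logarithms of the moduli of eigenvalues and $|\cdot|_\infty$ is stable word length. Limit maps $\xi:\partial_\infty\Gamma\to\mathbb{P}(V)$, $\xi^*:\partial_\infty\Gamma\to\mathbb{P}(V^* )$: equivariant, $\xi(x)\subset\ker\xi^*(y)$ iff $x=y$, and for infinite order $\gamma$ with attracting/repelling boundary fixed points $\gamma_\pm=\lim_{n\to\pm\infty}\gamma^n$, $\lambda_1(\gamma)>0$, the eigenvalue of modulus $e^{\lambda_1(\gamma)}$ is real and simple with eigenline $\xi(\gamma_+)$, and the eigenline of the dual action $\alpha\mapsto\alpha\circ\gamma^{-1}$ for the eigenvalue of modulus $e^{-\lambda_1(\gamma)}$ is $\xi^*(\gamma_-)$. $\mathbb{L}=\{[v:\alpha]\in\mathbb{P}(V\times V^* ):\alpha(v)>0\}$, $\gamma\cdot[v:\alpha]=[\gamma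 v:\alpha\circ\gamma^{-1}]$, and $\widetilde{\mathcal{M}}_\Gamma=\{[v:\alpha]\in\mathbb{L}:\forall x\in\partial_\infty\Gamma,\ \xi^*(x)(v)\ne0\text{ or }\alpha(\xi(x))\ne0\}$ (where $\xi^*(x)(v)\neq 0$ means a representative linear form does not vanish on $v$). *)

(* Defs.v *)
From HB Require Import structures.
From mathcomp Require Import all_boot all_order all_algebra.
From mathcomp Require Import all_classical all_reals all_analysis.
From mathcomp Require Import complex.
Set Implicit Arguments. Unset Strict Implicit. Unset Printing Implicit Defensive.
Import Order.TTheory GRing.Theory Num.Theory numFieldNormedType.Exports.
Local Open Scope ring_scope.
Local Open Scope classical_set_scope.

Section Defs.
Context {R : realType} {d : nat}.
Local Notation M := 'M[R]_d.

Definition SL_subgroup (G : set M) : Prop :=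
  [/\ G 1%:M,
      (forall g h, G g -> G h -> G (g *m h)),
      (forall g, G g -> G (invmx g)) &
      (forall g, G g -> \det g = 1)].

Definition mxpow (g : M) (n : nat) : M := iter n (mulmx g) 1%:M.

Definition torsion_free (G : set M) : Prop :=
  forall g, G g -> forall n, (0 < n)%N -> mxpow g n = 1%:M -> g = 1%:M.

Definition gen_letter (S : seq M) (a : M) : Prop :=
  exists2 s, s \in S & (a = s \/ a = invmx s).
Definition is_word (S : seq M) (w : seq M) : Prop :=
  forall a, a \in w -> gen_letter S a.
Definition word_prod (w : seq M) : M := foldr mulmx 1%:M w.

Definition generates (S : seq M) (G : set M) : Prop :=
  (forall s, s \in S -> G s) /\
  (forall g, G g -> exists w, is_word S w /\ word_prod w = g).

Definition wordlen (S : seq M) (g : M) : R :=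
  inf ((fun w : seq M => (size w)%:R) @` [set w | is_word S w /\ word_prod w = g]).

Definition stablen (S : seq M) (g : M) : R :=
  limn ((fun n : nat => wordlen S (mxpow g n.+1) / n.+1%:R) : R^nat).

(* Gromov product at the identity for the word metric d(g,h) = |g^{-1} h| *)
Definition gprod (S : seq M) (g h : M) : R :=
  (wordlen S g + wordlen S h - wordlen S (invmx g *m h)) / 2.

Definition gromov_hyperbolic (S : seq M) (G : set M) : Prop :=
  exists delta : R, forall x y z, G x -> G y -> G z ->
    Num.min (gprod S x y) (gprod S y z) - delta <= gprod S x z.

(* ---------- Gromov boundary: sequences converging at infinity ---------- *)
Definition conv_infty (S : seq M) (G : set M) (x : nat -> M) : Prop :=
  (forall n, G (x n)) /\
  forall K : R, exists N, forall i j, (N <= i)%N -> (N <= j)%N -> K <= gprod S (x i) (x j).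

(* two such sequences define the same boundary point *)
Definition bdry_equiv (S : seq M) (x y : nat -> M) : Prop :=
  forall K : R, exists N, forall i j, (N <= i)%N -> (N <= j)%N -> K <= gprod S (x i) (y j).

Definition cpolyC (g : M) : {poly R[i]} := char_poly (map_mx (real_complex R) g).

Definition specrad (g : M) : R :=
  sup ((@Normc.normc R) @` [set z | root (cpolyC g) z]).
Definition lam1 (g : M) : R := ln (specrad g).
(* e^{lambda_2(g)} : largest modulus after removing one eigenvalue of maximal modulus
   (eigenvalues counted with multiplicity) *)
Definition lam2 (g : M) : R :=
  ln (sup ((@Normc.normc R) @` [set z | exists z1, [/\ root (cpolyC g) z1,
             Normc.normc z1 = specrad g &
             root (cpolyC g %/ ('X - z1%:P)) z]])).

Definition proj_anosov (S : seq M) (G : set M) : Prop :=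
  gromov_hyperbolic S G /\
  exists c c' : R, 0 < c /\
    forall g, G g -> c * stablen S g - c' <= lam1 g - lam2 g.

Definition top_eig_real_simple (g : M) (mu : R) : Prop :=
  [/\ `|mu| = expR (lam1 g),
      root (cpolyC g) (real_complex R mu),
      ~~ ((('X - (real_complex R mu)%:P) ^+ 2) %| cpolyC g) &
      (forall z, root (cpolyC g) z -> Normc.normc z = expR (lam1 g) ->
                 z = real_complex R mu)].

Definition proj_eq {m n : nat} (u w : 'M[R]_(m, n)) : Prop :=
  exists2 c : R, c != 0 & u = c *: w.

(* [v : a] = [v' : a'] in P(V x V^* ) *)
Definition proj_eq_pair (p q : 'cV[R]_d * 'rV[R]_d) : Prop :=
  exists2 c : R, c != 0 & p.1 = c *: q.1 /\ p.2 = c *: q.2.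

Definition ev (a : 'rV[R]_d) (v : 'cV[R]_d) : R := (a *m v) ord0 ord0.

(* gamma^+ and gamma^- as boundary points *)
Definition attr (g : M) : nat -> M := fun n => mxpow g n.
Definition repl (g : M) : nat -> M := fun n => mxpow (invmx g) n.

Definition limit_maps (S : seq M) (G : set M)
    (xi : (nat -> M) -> 'cV[R]_d) (xis : (nat -> M) -> 'rV[R]_d) : Prop :=
  [/\ (* values are points of P(V), P(V^* ) *)
      (forall x, conv_infty S G x -> xi x != 0 /\ xis x != 0),
      (* well defined on the boundary *)
      (forall x y, conv_infty S G x -> conv_infty S G y -> bdry_equiv S x y ->
         proj_eq (xi x) (xi y) /\ proj_eq (xis x) (xis y)),
      (forall g x, G g -> conv_infty S G x ->
         proj_eq (xi (fun n => g *m x n)) (g *m xi x) /\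
         proj_eq (xis (fun n => g *m x n)) (xis x *m invmx g)),
      (forall x y, conv_infty S G x -> conv_infty S G y ->
         (ev (xis y) (xi x) = 0 <-> bdry_equiv S x y)) &
      (forall g, G g -> (forall n, (0 < n)%N -> mxpow g n != 1%:M) ->
         [/\ 0 < lam1 g,
             (exists mu : R, top_eig_real_simple g mu /\
                g *m xi (attr g) = mu *: xi (attr g)) &
             (exists nu : R, `|nu| = expR (- lam1 g) /\
                xis (repl g) *m invmx g = nu *: xis (repl g))])].

Definition in_Mtilde (S : seq M) (G : set M)
    (xi : (nat -> M) -> 'cV[R]_d) (xis : (nat -> M) -> 'rV[R]_d)
    (v : 'cV[R]_d) (a : 'rV[R]_d) : Prop :=
  0 < ev a v /\
  forall x, conv_infty S G x -> ev (xis x) v != 0 \/ ev a (xi x) != 0.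

End Defs.

(* Main.v *)
Require Import Defs.
From HB Require Import structures.
From mathcomp Require Import all_boot all_order all_algebra.
From mathcomp Require Import all_classical all_reals all_analysis.
From mathcomp Require Import complex.
From mathcomp Require Import zify ring lra.
Import Order.TTheory GRing.Theory Num.Theory numFieldNormedType.Exports.
Local Open Scope ring_scope.
Local Open Scope classical_set_scope.

Lemma rank_dvd (R : fieldType) n (A : 'M[R]_n) (mu : R) :
  (\rank (mu%:M - A)%R + 2 <= n)%N -> (('X - mu%:P) ^+ 2 %| char_poly A).
Proof.
move=> hr.
set M := mu%:M - A. set r := \rank M.
set L := col_ebase M. set U := row_ebase M.
set Y : {poly R} := 'X - mu%:P.
set C := map_mx polyC (invmx L *m invmx U).
set mid := Y *: C + pid_mx r.
have key : char_poly_mx A = map_mx polyC L *m mid *m map_mx polyC U.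
  rewrite /mid mulmxDr mulmxDl -scalemxAr -scalemxAl /C -!map_mxM.
  rewrite !mulmxA mulmxV ?col_ebase_unit // mul1mx mulVmx ?row_ebase_unit //.
  rewrite -(map_pid_mx polyC) -!map_mxM mulmx_ebase map_mx1 scalemx1 /M.
  rewrite /char_poly_mx /Y map_mxB map_scalar_mx /= raddfB /=.
  by rewrite addrA addrNK.
set dv := \row_(i < n) (if (i < r)%N then 1 else Y).
set B := \matrix_(i < n, j < n) (if (i < r)%N then mid i j else C i j).
have hmid : mid = diag_mx dv *m B.
  apply/matrixP => i j; rewrite mul_diag_mx !mxE.
  case: ifP => hi; first by rewrite mul1r.
  rewrite andbF addr0.
  by [].
rewrite /char_poly key !det_mulmx hmid det_mulmx det_diag.
apply: dvdp_mulr; apply: dvdp_mull; apply: dvdp_mulr.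
have -> : \prod_(i < n) dv 0 i = \prod_(0 <= i < n) (if (i < r)%N then 1 else Y).
  by rewrite big_mkord; apply: eq_bigr => i _; rewrite mxE.
have hr2 : (r + 2 <= n)%N by exact: hr.
have hrn : (r <= n)%N by lia.
rewrite (big_cat_nat (leq0n r) hrn) /=; apply: dvdp_mull.
rewrite (eq_big_nat _ _ (F2 := fun _ => Y)); last first.
  by move=> i /andP [hi _]; rewrite ltnNge hi.
rewrite prodr_const_nat; apply: dvdp_exp2l; lia.
Qed.

Lemma rank2 (R : fieldType) n (N : 'M[R]_n) (x y : 'rV_n) :
  x *m N = 0 -> y *m N = 0 -> y != 0 -> ~~ (x <= y)%MS -> (\rank N + 2 <= n)%N.
Proof.
move=> hx hy y0 nxy.
have h0 : col_mx x y *m N = 0 by rewrite mul_col_mx hx hy col_mx0.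
have := mulmx0_rank_max h0.
have : (2 <= \rank (col_mx x y))%N.
  rewrite -addsmxE.
  have : (y < x + y)%MS by rewrite ltmxE addsmxSr /= addsmx_sub submx_refl andbT.
  by rewrite ltmxErank rank_rV y0 => /andP [_].
lia.
Qed.

Lemma eig_row_unique (R : fieldType) n (A : 'M[R]_n) mu (x y : 'rV_n) :
  ~~ (('X - mu%:P)^+2 %| char_poly A) -> x *m A = mu *: x -> y *m A = mu *: y ->
  y != 0 -> exists c, x = c *: y.
Proof.
move=> nd hx hy y0.
have [/sub_rVP //|nxy] := boolP (x <= y)%MS.
have e (z : 'rV_n) : z *m A = mu *: z -> z *m (mu%:M - A) = 0.
  by move=> hz; rewrite mulmxBr mul_mx_scalar hz subrr.
by have := @rank_dvd _ _ _ _ (@rank2 _ _ _ _ _ (e _ hx) (e _ hy) y0 nxy); rewrite (negPf nd).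
Qed.

Lemma eig_col_unique (R : fieldType) n (A : 'M[R]_n) mu (x y : 'cV_n) :
  ~~ (('X - mu%:P)^+2 %| char_poly A) -> A *m x = mu *: x -> A *m y = mu *: y ->
  y != 0 -> exists c, x = c *: y.
Proof.
move=> nd hx hy y0.
have [/sub_rVP [c hc]|nxy] := boolP (x^T <= y^T)%MS.
  by exists c; rewrite -[x]trmxK hc linearZ /= trmxK.
have e (z : 'cV_n) : A *m z = mu *: z -> z^T *m (mu%:M - A)^T = 0.
  by move=> hz; rewrite -trmx_mul mulmxBl mul_scalar_mx hz subrr trmx0.
have y0' : y^T != 0 by rewrite -trmx0 (inj_eq trmx_inj).
have := @rank2 _ _ _ _ _ (e _ hx) (e _ hy) y0' nxy; rewrite mxrank_tr => /(@rank_dvd _ _ _ _).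
by rewrite (negPf nd).
Qed.


Lemma hyp_conv (R : realType) (F : nat -> nat -> R) (f : nat -> R) (D : nat -> nat -> R)
  (delta eps L : R) :
  (forall k l, F k l = (f k + f l - D k l) / 2) ->
  (forall a b c, Num.min (F a b) (F b c) - delta <= F a c) ->
  0 < eps -> 0 <= L ->
  (forall k, eps * k%:R <= f k) ->
  (forall k l, D k l <= L * (k - l + (l - k))%N%:R) ->
  forall K : R, exists N, forall i j, (N <= i)%N -> (N <= j)%N -> K <= F i j.
Proof.
move=> hF hh e0 L0 hf hD.
have [dl [hd0 hd]] : exists dl : R, 0 <= dl /\ delta <= dl.
  by exists `|delta|; split; [exact: normr_ge0|exact: ler_norm].
pose s := (Num.Def.trunc (dl / eps)).+1.
have hs : dl <= eps * s%:R.
  have := truncnS_gt (dl / eps); rewrite -/s => h.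
  by rewrite -ler_pdivrMl // ltW // mulrC.
pose B : R := dl + L * s%:R / 2.
have direct k l : (k - l + (l - k) <= s)%N -> eps * (minn k l)%:R - L * s%:R / 2 <= F k l.
  move=> hkl; rewrite hF.
  have h1 := hf k; have h2 := hf l; have h3 := hD k l.
  have h4 : L * (k - l + (l - k))%N%:R <= L * s%:R by rewrite ler_wpM2l // ler_nat.
  have h5 : eps * (minn k l)%:R <= eps * k%:R by apply: ler_wpM2l; [exact: ltW|rewrite ler_nat geq_minl].
  have h6 : eps * (minn k l)%:R <= eps * l%:R by apply: ler_wpM2l; [exact: ltW|rewrite ler_nat geq_minr].
  lra.
have main : forall m k l, (k - l + (l - k) <= m)%N -> eps * (minn k l)%:R - B <= F k l.
  elim=> [|m IH] k l hm.
    have := direct k l ltac:(lia); rewrite /B; lra.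
  have [hkl|hkl] := leqP (k - l + (l - k)) s.
    have := direct k l hkl; rewrite /B; lra.
  have [kl|lk] := leqP k l.
    have h1 := hh k (k + s)%N l.
    have h2 := direct k (k + s)%N ltac:(lia).
    have h3 := IH (k + s)%N l ltac:(lia).
    rewrite (_ : minn (k + s) l = (k + s)%N) in h3; last by lia.
    move: h2; rewrite (_ : minn k (k+s) = k); last by lia. move=> h2.
    rewrite natrD mulrDr in h3.
    move: h1; rewrite /Num.min; case: ifP => _; rewrite /B in h3 *; lra.
  have h1 := hh k (l + s)%N l.
  have h2 := direct (l + s)%N l ltac:(lia).
  have h3 := IH k (l + s)%N ltac:(lia).
  move: h2; rewrite (_ : minn (l + s) l = l); last by lia. move=> h2.
  move: h3; rewrite (_ : minn k (l + s) = (l + s)%N); last by lia. move=> h3.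
  rewrite natrD mulrDr in h3.
  move: h1; rewrite /Num.min; case: ifP => _; rewrite /B in h3 *; lra.
move=> K.
exists (Num.Def.trunc ((`|K| + `|B|) / eps)).+1 => i j hi hj.
have hN := truncnS_gt ((`|K| + `|B|) / eps).
have := main _ i j (leqnn _).
have hm : ((Num.Def.trunc ((`|K| + `|B|) / eps)).+1 <= minn i j)%N by rewrite leq_min hi hj.
have : (`|K| + `|B|) / eps <= (minn i j)%:R.
  apply: ltW; apply: (lt_le_trans hN); by rewrite ler_nat.
rewrite ler_pdivrMr // => h.
have : K <= `|K| by rewrite ler_norm.
have : B <= `|B| by rewrite ler_norm.
rewrite mulrC in h; lra.
Qed.

Set Implicit Arguments. Unset Strict Implicit.

Section W.
Variables (R : realType) (d : nat).
Local Notation M := 'M[R]_d.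

Lemma mxpowS (g : M) n : mxpow g n.+1 = g *m mxpow g n. Proof. by []. Qed.
Lemma mxpow0 (g : M) : mxpow g 0 = 1%:M. Proof. by []. Qed.

Lemma mxpowD (g : M) a b : mxpow g (a + b) = mxpow g a *m mxpow g b.
Proof.
elim: a => [|a IH]; first by rewrite add0n mxpow0 mul1mx.
by rewrite addSn !mxpowS IH mulmxA.
Qed.

Lemma mxpowSr (g : M) n : mxpow g n.+1 = mxpow g n *m g.
Proof. by rewrite -addn1 mxpowD mxpowS mxpow0 mulmx1. Qed.

Lemma mxpow_in (G : set M) (g : M) n : SL_subgroup G -> G g -> G (mxpow g n).
Proof. case=> h1 hM _ _ hg; elim: n => [|n IH] //=; exact: hM. Qed.

Lemma SL_unit (G : set M) (g : M) : SL_subgroup G -> G g -> g \in unitmx.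
Proof. by case=> _ _ _ hdet hg; rewrite unitmxE hdet ?unitr1 // unitfE oner_neq0. Qed.

Lemma mxpow_unit (g : M) n : g \in unitmx -> mxpow g n \in unitmx.
Proof.
move=> hg; elim: n => [|n IH]; first exact: unitmx1.
by rewrite mxpowS unitmx_mul hg IH.
Qed.

Lemma mxpowV (g : M) n : g \in unitmx -> invmx (mxpow g n) = mxpow (invmx g) n.
Proof.
move=> hg.
have key : mxpow (invmx g) n *m mxpow g n = 1%:M.
  elim: n => [|n IH]; first by rewrite !mxpow0 mul1mx.
  rewrite mxpowS mxpowSr mulmxA -(mulmxA (invmx g)) IH mulmx1 mulVmx //.
by rewrite -[RHS](mulmxK (mxpow_unit n hg)) key mul1mx.
Qed.

Lemma word_prod_cat (w1 w2 : seq M) :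
  word_prod (w1 ++ w2) = word_prod w1 *m word_prod w2.
Proof.
elim: w1 => [|a w IH] /=; first by rewrite mul1mx.
by rewrite /word_prod /= -/(word_prod _) IH mulmxA.
Qed.

Lemma is_word_cat (S : seq M) w1 w2 :
  is_word S w1 -> is_word S w2 -> is_word S (w1 ++ w2).
Proof. by move=> h1 h2 a; rewrite mem_cat => /orP [] ?; [exact: h1|exact: h2]. Qed.

Definition wpow (w : seq M) n := iter n (cat w) [::].

Lemma wpowP (S : seq M) w n : is_word S w ->
  [/\ is_word S (wpow w n), word_prod (wpow w n) = mxpow (word_prod w) n &
      size (wpow w n) = (n * size w)%N].
Proof.
move=> hw; elim: n => [|n [IH1 IH2 IH3]]; first by split => // a; rewrite in_nil.
rewrite /wpow /= -/(wpow w n); split.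
- exact: is_word_cat.
- by rewrite word_prod_cat IH2.
- by rewrite size_cat IH3 mulSn.
Qed.

Lemma wordlen_le (S : seq M) (h : M) w :
  is_word S w -> word_prod w = h -> wordlen S h <= (size w)%:R.
Proof.
move=> hw hp; rewrite /wordlen; apply: ge_inf.
  by exists 0 => x [w' _ <-]; exact: ler0n.
by exists w.
Qed.

Lemma wordlen_ge (S : seq M) (G : set M) (h : M) x :
  generates S G -> G h ->
  (forall w, is_word S w -> word_prod w = h -> x <= (size w)%:R) -> x <= wordlen S h.
Proof.
move=> [_ hgen] hh hx; apply: lb_le_inf.
  by have [w [hw hp]] := hgen h hh; exists (size w)%:R, w.
by move=> y [w [hw hp] <-]; exact: hx.
Qed.

Definition rnorm (r : 'rV[R]_d) : R := \sum_j `|r 0 j|.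
Definition Kmx (B : M) : R := \sum_i \sum_j `|B i j|.

Lemma rnorm_ge0 r : 0 <= rnorm r.
Proof. by apply: sumr_ge0 => j _; exact: normr_ge0. Qed.

Lemma Kmx_ge0 B : 0 <= Kmx B.
Proof. by apply: sumr_ge0 => i _; apply: sumr_ge0 => j _; exact: normr_ge0. Qed.

Lemma rnormZ c r : rnorm (c *: r) = `|c| * rnorm r.
Proof. by rewrite /rnorm mulr_sumr; apply: eq_bigr => j _; rewrite mxE normrM. Qed.

Lemma rnorm_gt0 r : r != 0 -> 0 < rnorm r.
Proof.
move=> r0.
have [j hj] : exists j, r 0 j != 0.
  apply/existsP; apply: contraR r0 => /existsPn h.
  by apply/eqP/rowP => j; rewrite mxE; apply/eqP; have := h j; rewrite negbK.
rewrite /rnorm (bigD1 j) //=; apply: (lt_le_trans (y := `|r 0 j|)).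
  by rewrite normr_gt0.
by rewrite lerDl; apply: sumr_ge0 => i _; exact: normr_ge0.
Qed.

Lemma rnorm_mul r B : rnorm (r *m B) <= Kmx B * rnorm r.
Proof.
rewrite /rnorm /Kmx.
apply: (le_trans (y := \sum_j \sum_i `|r 0 i| * `|B i j|)).
  apply: ler_sum => j _; rewrite mxE; apply: (le_trans (ler_norm_sum _ _ _)).
  by apply: ler_sum => i _; rewrite normrM.
rewrite exchange_big /= mulr_sumr; apply: ler_sum => i _.
rewrite -mulr_sumr mulrC; apply: ler_wpM2r; first exact: normr_ge0.
rewrite [leRHS](bigD1 i) //= lerDl; apply: sumr_ge0 => i' _.
by apply: sumr_ge0 => j _; exact: normr_ge0.
Qed.

Definition Cst (S : seq M) : R := 2 + \sum_(s <- S) (Kmx s + Kmx (invmx s)).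

Lemma Cst_ge2 S : 2 <= Cst S.
Proof.
have : 0 <= \sum_(s <- S) (Kmx s + Kmx (invmx s)).
  by apply: sumr_ge0 => s _; apply: addr_ge0; exact: Kmx_ge0.
rewrite /Cst; lra.
Qed.

Lemma letter_le (S : seq M) a : gen_letter S a -> Kmx a <= Cst S.
Proof.
move=> [s hs ha]; rewrite /Cst (big_rem s hs) /=.
have h1 := Kmx_ge0 s; have h2 := Kmx_ge0 (invmx s).
have h3 : 0 <= \sum_(x <- rem s S) (Kmx x + Kmx (invmx x)).
  by apply: sumr_ge0 => x _; apply: addr_ge0; exact: Kmx_ge0.
by case: ha => ->; lra.
Qed.

Lemma word_norm (S : seq M) w r :
  is_word S w -> rnorm (r *m word_prod w) <= Cst S ^+ size w * rnorm r.
Proof.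
elim: w r => [|a w IH] r hw /=; first by rewrite mulmx1 expr0 mul1r.
rewrite /word_prod /= -/(word_prod _) mulmxA.
have hw' : is_word S w by move=> x hx; apply: hw; rewrite inE hx orbT.
apply: (le_trans (IH _ hw')); rewrite exprSr -mulrA; apply: ler_wpM2l.
  by apply: exprn_ge0; apply: le_trans (Cst_ge2 S).
apply: (le_trans (rnorm_mul r a)); apply: ler_wpM2r; first exact: rnorm_ge0.
by apply: letter_le; apply: hw; exact: mem_head.
Qed.

Lemma wordlen_lower (S : seq M) (G : set M) (h : M) (mu : R) (r : 'rV[R]_d) :
  generates S G -> SL_subgroup G -> G h -> r != 0 -> r *m h = mu *: r -> 1 < `|mu| ->
  exists2 eps : R, 0 < eps & forall n, eps * n%:R <= wordlen S (mxpow h n).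
Proof.
move=> hgen hSL hh r0 hr hmu.
have C2 := Cst_ge2 S.
have C1 : 1 < Cst S by apply: lt_le_trans C2; rewrite ltr1n.
have hlnC : 0 < ln (Cst S) by rewrite ln_gt0.
have hlnmu : 0 < ln `|mu| by rewrite ln_gt0.
exists (ln `|mu| / ln (Cst S)); first by rewrite divr_gt0.
move=> n; apply: (wordlen_ge hgen (mxpow_in n hSL hh)) => w hw hp.
have hN := rnorm_gt0 r0.
have hpow : forall k, r *m mxpow h k = mu ^+ k *: r.
  elim=> [|k IH]; first by rewrite mxpow0 mulmx1 expr0 scale1r.
  by rewrite mxpowSr mulmxA IH -scalemxAl hr scalerA exprSr.
have := word_norm r hw; rewrite hp hpow rnormZ normrX ler_pM2r // => hle.
have hmu0 : 0 < `|mu| by apply: lt_trans hmu.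
have : ln (`|mu| ^+ n) <= ln (Cst S ^+ size w).
  by rewrite ler_ln ?posrE ?exprn_gt0 // (lt_trans ltr01 C1).
have hC0 : 0 < Cst S by apply: lt_trans C1.
rewrite (lnXn n hmu0) (lnXn (size w) hC0).
rewrite -[_ *+ n]mulr_natr -[_ *+ size w]mulr_natr => hl.
by rewrite mulrAC ler_pdivrMr // (mulrC (size w)%:R).
Qed.

Lemma wordlen_upper (S : seq M) (G : set M) (h : M) :
  generates S G -> G h ->
  exists2 L : R, 0 <= L & forall n, wordlen S (mxpow h n) <= L * n%:R.
Proof.
move=> hgen hh; have [w [hw hp]] := hgen.2 h hh.
exists (size w)%:R => // n.
have [hw' hp' hs'] := wpowP n hw; rewrite hp in hp'.
by apply: (le_trans (wordlen_le hw' hp')); rewrite hs' natrM mulrC.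
Qed.

End W.


Lemma D_bound (R : realType) d (S : seq 'M[R]_d) (G : set 'M[R]_d) h :
  SL_subgroup G -> generates S G -> G h ->
  exists2 L : R, 0 <= L & forall k l,
    wordlen S (invmx (mxpow h k) *m mxpow h l) <= L * (k - l + (l - k))%N%:R.
Proof.
move=> hSL hgen hh.
have hu := SL_unit hSL hh.
have [L1 L10 h1] := wordlen_upper hgen hh.
have hi : G (invmx h) by case: hSL => _ _ hinv _; exact: hinv.
have [L2 L20 h2] := wordlen_upper hgen hi.
exists (L1 + L2); first exact: addr_ge0.
move=> k l; have [kl|lk] := leqP k l.
  have -> : invmx (mxpow h k) *m mxpow h l = mxpow h (l - k).
    by rewrite -{1}(subnKC kl) mxpowD mulKmx // mxpow_unit.
  have -> : (k - l + (l - k) = l - k)%N by lia.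
  by apply: (le_trans (h1 _)); rewrite ler_wpM2r // ?ler0n // lerDl.
have -> : invmx (mxpow h k) *m mxpow h l = mxpow (invmx h) (k - l).
  rewrite mxpowV // -{1}(subnK (ltnW lk)) mxpowD -mulmxA -(mxpowV l hu).
  by rewrite mulVmx ?mxpow_unit // mulmx1.
have -> : (k - l + (l - k) = k - l)%N by lia.
by apply: (le_trans (h2 _)); rewrite ler_wpM2r // ?ler0n // lerDr.
Qed.

Lemma conv_pow (R : realType) d (S : seq 'M[R]_d) (G : set 'M[R]_d) h :
  SL_subgroup G -> generates S G -> gromov_hyperbolic S G -> G h ->
  (exists2 eps : R, 0 < eps & forall n, eps * n%:R <= wordlen S (mxpow h n)) ->
  conv_infty S G (fun n => mxpow h n).
Proof.
move=> hSL hgen [delta hd] hh [eps e0 he].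
have [L L0 hL] := D_bound hSL hgen hh.
split; first by move=> n; exact: mxpow_in.
apply: (@hyp_conv R (fun k l => gprod S (mxpow h k) (mxpow h l))
   (fun k => wordlen S (mxpow h k))
   (fun k l => wordlen S (invmx (mxpow h k) *m mxpow h l)) delta eps L) => //.
by move=> a b c; apply: hd; exact: mxpow_in.
Qed.

Lemma top_row (R : realType) d (h : 'M[R]_d) mu :
  top_eig_real_simple h mu -> exists2 r : 'rV[R]_d, r != 0 & r *m h = mu *: r.
Proof.
case=> _ hroot _ _.
have : eigenvalue h mu.
  by rewrite eigenvalue_root_char -(fmorph_root (real_complex R)) map_char_poly.
by move/eigenvalueP => [r hr r0]; exists r.
Qed.

Lemma top_nodbl (R : realType) d (h : 'M[R]_d) mu :
  top_eig_real_simple h mu -> ~~ (('X - mu%:P)^+2 %| char_poly h).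
Proof.
case=> _ _ hnd _.
by rewrite -(dvdp_map (real_complex R)) rmorphXn /= map_polyXsubC map_char_poly.
Qed.

Lemma evZl (R : realType) d (b : 'rV[R]_d) (v : 'cV[R]_d) c : ev (c *: b) v = c * ev b v.
Proof. by rewrite /ev -scalemxAl mxE. Qed.
Lemma evZr (R : realType) d (b : 'rV[R]_d) (v : 'cV[R]_d) c : ev b (c *: v) = c * ev b v.
Proof. by rewrite /ev -scalemxAr mxE. Qed.

Lemma ev_swap (R : realType) d (b : 'rV[R]_d) (A : 'M[R]_d) (v : 'cV[R]_d) x y :
  b *m A = x *: b -> A *m v = y *: v -> ev b v != 0 -> x = y.
Proof.
move=> hb hv h0.
have e3 : ev b (A *m v) = ev (b *m A) v by rewrite /ev mulmxA.
rewrite hb hv evZl evZr in e3.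
exact: (mulIf h0 (esym e3)).
Qed.

Theorem lemma3p5 (R : realType) (d : nat) (G : set 'M[R]_d) (S : seq 'M[R]_d)
  (xi : (nat -> 'M[R]_d) -> 'cV[R]_d) (xis : (nat -> 'M[R]_d) -> 'rV[R]_d)
  (v : 'cV[R]_d) (a : 'rV[R]_d) (g : 'M[R]_d) (T : R) :
  (1 < d)%N ->
  SL_subgroup G -> generates S G -> torsion_free G -> proj_anosov S G ->
  limit_maps S G xi xis ->
  in_Mtilde S G xi xis v a ->
  G g -> g != 1%:M -> 0 <= T ->
  proj_eq_pair (g *m v, a *m invmx g) (expR T *: v, expR (- T) *: a) ->
  [/\ proj_eq v (xi (attr g)), proj_eq a (xis (repl g)) & T = lam1 g].
Proof.
move=> hd1 hSL hgen htf hano hlim hM hg g1 hT hpe.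
have hu := SL_unit hSL hg.
have hgi : G (invmx g) by case: hSL => _ _ hinv _; exact: hinv.
have inf_ord : forall h, G h -> h != 1%:M -> forall n, (0 < n)%N -> mxpow h n != 1%:M.
  move=> h hh h1 n n0; apply/negP => /eqP e; move/eqP: h1; apply; exact: htf hh n n0 e.
have gi1 : invmx g != 1%:M.
  by apply: contraNneq g1 => e; rewrite -[g]invmxK e invmx1.
case: hlim => hnz hwd heq htr hdyn.
have [lam_g [mu [hmu_top hmu_eig]] [nu [hnu hnu_eig]]] := hdyn g hg (inf_ord g hg g1).
have [lam_gi [mu2 [hmu2_top hmu2_eig]] [nu2 [hnu2 hnu2_eig]]] :=
  hdyn (invmx g) hgi (inf_ord _ hgi gi1).
have cv (h : 'M[R]_d) mu' : G h -> top_eig_real_simple h mu' -> 0 < lam1 h ->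
    conv_infty S G (fun n => mxpow h n).
  move=> hh htop hl; apply: conv_pow => //; first exact: hano.1.
  have [r r0 hr] := top_row htop.
  apply: (wordlen_lower hgen hSL hh r0 hr).
  by case: htop => habs _ _ _; rewrite habs expR_gt1.
have cA : conv_infty S G (attr g) := cv g mu hg hmu_top lam_g.
have cR : conv_infty S G (repl g) := cv _ mu2 hgi hmu2_top lam_gi.
case: hpe => c c0 [/= e1 e2].
case: hM => hav hM.
have eT : expR T * expR (- T) = 1 by rewrite expRN mulfV // gt_eqF // expR_gt0.
have hc2 : c * c = 1.
  have E : ev a v = (c * c) * ev a v.
    have E0 : a *m v = (a *m invmx g) *m (g *m v) by rewrite mulmxA mulmxKV.
    rewrite {1}/ev E0 e2 e1 -/(ev _ _) !evZl !evZr.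
    by rewrite expRN; field; rewrite gt_eqF // expR_gt0.
  apply/eqP; rewrite -subr_eq0; apply/eqP.
  have : (c * c - 1) * ev a v = 0 by rewrite mulrBl -E mul1r subrr.
  by move/eqP; rewrite mulf_eq0 (gt_eqF hav) orbF => /eqP.
have hc1 : `|c| = 1.
  have : `|c| ^+ 2 == 1 by rewrite expr2 -normrM hc2 normr1.
  rewrite sqrf_eq1 => /orP [/eqP //|/eqP e].
  by move: (normr_ge0 c); rewrite e ler0N1.
set lam := c * expR T.
have gv : g *m v = lam *: v by rewrite e1 scalerA.
have ag : a *m g = lam *: a.
  have E : (a *m invmx g) *m g = a by rewrite mulmxKV.
  rewrite e2 -scalemxAl -scalemxAl in E.
  rewrite -{2}E !scalerA.
  have -> : lam * c * expR (- T) = 1.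
    by rewrite /lam expRN -hc2; field; rewrite gt_eqF // expR_gt0.
  by rewrite scale1r.
have hlam : `|lam| = expR T by rewrite /lam normrM hc1 mul1r gtr0_norm // expR_gt0.
have lmu : lam = mu.
  case: (hM _ cA) => hne.
    exfalso.
    have rgi : repl (invmx g) = attr g by rewrite /repl invmxK.
    rewrite rgi invmxK in hnu2_eig.
    have := ev_swap hnu2_eig gv hne => e.
    move: hnu2; rewrite e hlam => /expR_inj => eT2.
    by move: hT; rewrite eT2 oppr_ge0 leNgt lam_gi.
  exact: ev_swap ag hmu_eig hne.
have hTl : T = lam1 g.
  case: hmu_top => habs _ _ _.
  by apply: expR_inj; rewrite -habs -lmu hlam.
have v0 : v != 0 by apply: contraTneq hav => ->; rewrite /ev mulmx0 mxE ltxx.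
have a0 : a != 0 by apply: contraTneq hav => ->; rewrite /ev mul0mx mxE ltxx.
split => //.
- have w0 : xi (attr g) != 0 by have [] := hnz _ cA.
  have [c' hc'] := @eig_col_unique _ _ _ _ _ _ (top_nodbl hmu_top) (etrans gv (congr1 (fun z => z *: v) lmu)) hmu_eig w0.
  exists c' => //; apply: contraNneq v0 => c'0; by rewrite hc' c'0 scale0r.
- case: (hM _ cR) => hne; last first.
    exfalso.
    have ai : a *m invmx g = (c * expR (- T)) *: a by rewrite e2 scalerA.
    have := ev_swap ai hmu2_eig hne => e.
    case: hmu2_top => habs _ _ _.
    have : `|c * expR (- T)| = expR (lam1 (invmx g)) by rewrite e habs.
    rewrite normrM hc1 mul1r gtr0_norm ?expR_gt0 // => /expR_inj e'.
    by move: hT; rewrite -oppr_le0 e' leNgt lam_gi.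
  move: hne hnu_eig; set b := xis (repl g) => hne hnu_eig.
  have b0 : b != 0 by apply: contraTneq hne => ->; rewrite /ev mul0mx mxE eqxx.
  have nu0 : nu != 0 by rewrite -normr_eq0 hnu gt_eqF // expR_gt0.
  have bg : b *m g = nu^-1 *: b.
    have E : (b *m invmx g) *m g = b by rewrite mulmxKV.
    rewrite hnu_eig -scalemxAl in E.
    by rewrite -{2}E scalerA mulVf // scale1r.
  have nm : nu^-1 = mu by rewrite -lmu; exact: ev_swap bg gv hne.
  rewrite nm in bg.
  have ag' : a *m g = mu *: a by rewrite ag lmu.
  have [c' hc'] := @eig_row_unique _ _ _ _ _ _ (top_nodbl hmu_top) ag' bg b0.
  exists c' => //; apply: contraNneq a0 => c'0; by rewrite hc' c'0 scale0r.
Qed.
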